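(* Let $X\in L_2^p(P)$ be centered with $\Sigma=\mathrm{Cov}(X)$, let $\varepsilon\in L_2^q(P)$ be centered with $V=\mathrm{Cov}(\varepsilon)$ and stochastically independent of $X$, let $Z\in\mathbb R^{q\times p}$ and $Y=ZX+\varepsilon$. Put $B=Z\Sigma Z^\tau$, $C=B+V$, $K=\Sigma Z^\tau C^-$ and $Z^\Sigma=\Sigma Z^\tau B^-$. Then, regardless of the ranks of $Z$ or $B$, $\mathrm{oP}(\varepsilon\,|\,Y)=(I_q-ZK)Y$ and $$\mathrm{oP}(X\,|\,Y)=Z^\Sigma\big(Y-\mathrm{oP}(\varepsilon\,|\,Y)\big)\quad\text{almost surely},$$ where $\mathrm{oP}(X\,|\,Y)=KY$.
   Context: $M^-$ denotes the Moore–Penrose generalized inverse of a matrix $M$. For random vectors $a,b$ in $L_2$, $\mathrm{oP}(a\,|\,b)$ denotes the best linear reconstruction of $a$ by means of $b$, i.e. the componentwise orthogonal $L_2$-projection of $a$ onto the closed linear span of the components of $b$ (for centered vectors, $\mathrm{oP}(a|b)=\mathrm{Cov}(a,b)\mathrm{Cov}(b)^-b$). $I_q$ is the $q\times q$ identity. *)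

(* Defs.v *)
From HB Require Import structures.
From mathcomp Require Import all_boot all_order all_algebra.
From Stdlib Require Import ClassicalEpsilon.
Set Implicit Arguments. Unset Strict Implicit. Unset Printing Implicit Defensive.
Import Order.TTheory GRing.Theory Num.Theory.
Local Open Scope ring_scope.

Definition is_MP (R : realFieldType) (m n : nat)
    (A : 'M[R]_(m, n)) (G : 'M[R]_(n, m)) : Prop :=
  [/\ A *m G *m A = A, G *m A *m G = G,
      (A *m G)^T = A *m G & (G *m A)^T = G *m A].

(* The Moore-Penrose inverse M^- (chosen among matrices satisfying the
   Penrose conditions; it exists and is unique). *)
Definition mpinv (R : realFieldType) (m n : nat) (A : 'M[R]_(m, n)) : 'M[R]_(n, m) :=
  epsilon (inhabits 0) (fun G => is_MP A G).

(* Model of centered L_2(P): a real vector space H with the (semi-definite)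
   inner product ip a b = E[a b].  Random vectors in L_2^n are 'I_n -> H. *)
Definition is_L2 (R : realFieldType) (H : lmodType R) (ip : H -> H -> R) : Prop :=
  [/\ (forall (a : R) (x y z : H), ip (a *: x + y) z = a * ip x z + ip y z),
      (forall x y : H, ip x y = ip y x)
    & (forall x : H, 0 <= ip x x)].

Definition Cov (R : realFieldType) (H : lmodType R) (ip : H -> H -> R)
    (m n : nat) (a : 'I_m -> H) (b : 'I_n -> H) : 'M[R]_(m, n) :=
  \matrix_(i, j) ip (a i) (b j).

Definition mxapp (R : realFieldType) (H : lmodType R) (m n : nat)
    (A : 'M[R]_(m, n)) (x : 'I_n -> H) : 'I_m -> H :=
  fun i => \sum_j A i j *: x j.

Definition in_span (R : realFieldType) (H : lmodType R) (n : nat)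
    (b : 'I_n -> H) (h : H) : Prop :=
  exists c : 'I_n -> R, h = \sum_j c j *: b j.

(* pa is (a version of) oP(a | b): componentwise orthogonal projection of a
   onto the (finite-dimensional, hence closed) span of the components of b. *)
Definition is_oP (R : realFieldType) (H : lmodType R) (ip : H -> H -> R)
    (m n : nat) (b : 'I_n -> H) (a pa : 'I_m -> H) : Prop :=
  forall i, in_span b (pa i) /\ forall j, ip (a i - pa i) (b j) = 0.

(* almost sure equality of random vectors: E|u_i - v_i|^2 = 0 for all i *)
Definition as_eq (R : realFieldType) (H : lmodType R) (ip : H -> H -> R)
    (m : nat) (u v : 'I_m -> H) : Prop :=
  forall i, ip (u i - v i) (u i - v i) = 0.

(* Main.v *)
Require Import Defs.
From HB Require Import structures.
From mathcomp Require Import all_boot all_order all_algebra.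
From Stdlib Require Import ClassicalEpsilon.
From mathcomp Require Import ring lra.
Set Implicit Arguments. Unset Strict Implicit.
Import Order.TTheory GRing.Theory Num.Theory.
Local Open Scope ring_scope.

Lemma rv_sq0 (R : realFieldType) k (x : 'rV[R]_k) : x *m x^T = 0 -> x = 0.
Proof.
move=> h; have h0 : (x *m x^T) 0 0 = 0 by rewrite h mxE.
rewrite mxE in h0.
apply/rowP => j; rewrite mxE.
have hp : forall i, xpredT i -> 0 <= x 0 i * x^T i 0.
  by move=> i _; rewrite mxE -expr2 sqr_ge0.
have := @psumr_eq0P R _ xpredT (fun i => x 0 i * x^T i 0) hp h0 j isT.
by rewrite mxE -expr2 => /eqP; rewrite sqrf_eq0 => /eqP.
Qed.

Lemma gram_unit (R : realFieldType) k n (G : 'M[R]_(k, n)) :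
  row_free G -> G *m G^T \in unitmx.
Proof.
move=> fG; rewrite -row_free_unit; apply: inj_row_free => v hv.
have : (v *m G) *m (v *m G)^T = 0 by rewrite trmx_mul !mulmxA -(mulmxA v) hv mul0mx.
move/rv_sq0 => h; apply/eqP; by rewrite -(mulmx_free_eq0 _ fG) h.
Qed.

Lemma mp_fact (R : realFieldType) m r n (F : 'M[R]_(m, r)) (G : 'M[R]_(r, n)) :
  G *m G^T \in unitmx -> F^T *m F \in unitmx -> exists X, is_MP (F *m G) X.
Proof.
move=> uM uN.
set M := G *m G^T in uM *; set N := F^T *m F in uN *.
have sM : (invmx M)^T = invmx M by rewrite trmx_inv /M trmx_mul trmxK.
have sN : (invmx N)^T = invmx N by rewrite trmx_inv /N trmx_mul trmxK.
exists (G^T *m invmx M *m invmx N *m F^T).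
have AG : F *m G *m (G^T *m invmx M *m invmx N *m F^T) = F *m invmx N *m F^T.
  by rewrite !mulmxA -(mulmxA F G) -/M -(mulmxA F M) mulmxV // mulmx1.
have GA : (G^T *m invmx M *m invmx N *m F^T) *m (F *m G) = G^T *m invmx M *m G.
  by rewrite !mulmxA -(mulmxA _ F^T F) -/N -(mulmxA _ (invmx N) N) mulVmx // mulmx1.
split.
- by rewrite AG !mulmxA -(mulmxA _ F^T F) -/N -(mulmxA _ (invmx N) N) mulVmx // mulmx1.
- by rewrite GA !mulmxA -(mulmxA _ G G^T) -/M -(mulmxA _ (invmx M) M) mulVmx // mulmx1.
- by rewrite AG !trmx_mul trmxK sN mulmxA.
- by rewrite GA !trmx_mul trmxK sM mulmxA.
Qed.

Lemma mp_exists (R : realFieldType) m n (A : 'M[R]_(m, n)) : exists G, is_MP A G.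
Proof.
have fF : row_free (col_base A)^T.
  rewrite /row_free mxrank_tr; have := col_base_full A; by rewrite /row_full.
have uN : (col_base A)^T *m col_base A \in unitmx by have := gram_unit fF; rewrite trmxK.
have [X hX] := mp_fact (gram_unit (row_base_free A)) uN.
by exists X; rewrite -(mulmx_base A).
Qed.

Lemma mpinvP (R : realFieldType) m n (A : 'M[R]_(m, n)) : is_MP A (mpinv A).
Proof. rewrite /mpinv; apply: epsilon_spec; apply: mp_exists. Qed.

Lemma ip0l (R : realFieldType) (H : lmodType R) (ip : H -> H -> R) (hip : is_L2 ip) z :
  ip 0 z = 0.
Proof.
case: hip => lin _ _; have := lin 1 0 0 z; rewrite scale1r addr0 mul1r => h.
by have := congr1 (fun t => t - ip 0 z) h; rewrite /= subrr addrK => <-.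
Qed.


Lemma ipDl (R : realFieldType) (H : lmodType R) (ip : H -> H -> R) (hip : is_L2 ip) z x y :
  ip (x + y) z = ip x z + ip y z.
Proof. by case: hip => lin _ _; rewrite -[x]scale1r lin mul1r scale1r. Qed.

Lemma ipZl (R : realFieldType) (H : lmodType R) (ip : H -> H -> R) (hip : is_L2 ip) z a x :
  ip (a *: x) z = a * ip x z.
Proof. by have [lin _ _] := hip; rewrite -[a *: x]addr0 lin ip0l // addr0. Qed.

Lemma ipNl (R : realFieldType) (H : lmodType R) (ip : H -> H -> R) (hip : is_L2 ip) z x :
  ip (- x) z = - ip x z.
Proof. by rewrite -scaleN1r ipZl // mulN1r. Qed.

Lemma ipBl (R : realFieldType) (H : lmodType R) (ip : H -> H -> R) (hip : is_L2 ip) z x y :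
  ip (x - y) z = ip x z - ip y z.
Proof. by rewrite ipDl // ipNl. Qed.

Lemma ip_suml (R : realFieldType) (H : lmodType R) (ip : H -> H -> R) (hip : is_L2 ip) z
  n (f : 'I_n -> H) : ip (\sum_j f j) z = \sum_j ip (f j) z.
Proof.
by rewrite (big_morph (fun h => ip h z) (ipDl hip z) (ip0l hip z)).
Qed.

Lemma ipsym (R : realFieldType) (H : lmodType R) (ip : H -> H -> R) (hip : is_L2 ip) x y :
  ip x y = ip y x.
Proof. by case: hip. Qed.

Lemma CovMl (R : realFieldType) (H : lmodType R) (ip : H -> H -> R) (hip : is_L2 ip)
  k m n (A : 'M[R]_(k, m)) (a : 'I_m -> H) (b : 'I_n -> H) :
  Cov ip (mxapp A a) b = A *m Cov ip a b.
Proof.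
apply/matrixP => i j; rewrite !mxE /mxapp ip_suml //; apply: eq_bigr => l _.
by rewrite ipZl // mxE.
Qed.

Lemma Cov_tr (R : realFieldType) (H : lmodType R) (ip : H -> H -> R) (hip : is_L2 ip)
  m n (a : 'I_m -> H) (b : 'I_n -> H) : Cov ip b a = (Cov ip a b)^T.
Proof. by apply/matrixP => i j; rewrite !mxE ipsym. Qed.

Lemma CovMr (R : realFieldType) (H : lmodType R) (ip : H -> H -> R) (hip : is_L2 ip)
  k m n (A : 'M[R]_(k, n)) (a : 'I_m -> H) (b : 'I_n -> H) :
  Cov ip a (mxapp A b) = Cov ip a b *m A^T.
Proof. by rewrite Cov_tr // CovMl // trmx_mul -Cov_tr. Qed.

Lemma CovDl (R : realFieldType) (H : lmodType R) (ip : H -> H -> R) (hip : is_L2 ip)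
  m n (a a' : 'I_m -> H) (b : 'I_n -> H) :
  Cov ip (fun i => a i + a' i) b = Cov ip a b + Cov ip a' b.
Proof. by apply/matrixP => i j; rewrite !mxE ipDl. Qed.

Lemma CovBl (R : realFieldType) (H : lmodType R) (ip : H -> H -> R) (hip : is_L2 ip)
  m n (a a' : 'I_m -> H) (b : 'I_n -> H) :
  Cov ip (fun i => a i - a' i) b = Cov ip a b - Cov ip a' b.
Proof. by apply/matrixP => i j; rewrite !mxE ipBl. Qed.

Lemma CovDr (R : realFieldType) (H : lmodType R) (ip : H -> H -> R) (hip : is_L2 ip)
  m n (a : 'I_m -> H) (b b' : 'I_n -> H) :
  Cov ip a (fun i => b i + b' i) = Cov ip a b + Cov ip a b'.
Proof. by rewrite Cov_tr // CovDl // linearD /= -!Cov_tr. Qed.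

Lemma CS0 (R : realFieldType) (H : lmodType R) (ip : H -> H -> R) (hip : is_L2 ip) u w :
  ip w w = 0 -> ip u w = 0.
Proof.
move=> hw; have [lin sym pos] := hip.
apply/eqP; apply/negPn/negP => hc.
set c := ip u w in hc *; set d := ip u u.
set t := - (d + 1) / (2 * c).
have := pos (u + t *: w).
have -> : ip (u + t *: w) (u + t *: w) = d + t * c + t * c.
  rewrite ipDl // ipZl // (sym u) (sym w) ipDl // ipZl // ipDl // ipZl // hw.
  by rewrite (sym w u) -/c -/d; ring.
have -> : d + t * c + t * c = -1.
  by rewrite /t; field.
by rewrite ler0N1.
Qed.

Lemma span_mxapp (R : realFieldType) (H : lmodType R) m n (A : 'M[R]_(m, n))
  (b : 'I_n -> H) i : in_span b (mxapp A b i).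
Proof. by exists (fun j => A i j). Qed.

Lemma span0 (R : realFieldType) (H : lmodType R) n (b : 'I_n -> H) : in_span b 0.
Proof. by exists (fun _ => 0); rewrite big1 // => j _; rewrite scale0r. Qed.

Lemma spanD (R : realFieldType) (H : lmodType R) n (b : 'I_n -> H) x y :
  in_span b x -> in_span b y -> in_span b (x + y).
Proof.
move=> [c ->] [c' ->]; exists (fun j => c j + c' j).
by rewrite -big_split; apply: eq_bigr => j _; rewrite scalerDl.
Qed.

Lemma spanZ (R : realFieldType) (H : lmodType R) n (b : 'I_n -> H) a x :
  in_span b x -> in_span b (a *: x).
Proof.
move=> [c ->]; exists (fun j => a * c j).
by rewrite scaler_sumr; apply: eq_bigr => j _; rewrite scalerA.
Qed.

Lemma spanB (R : realFieldType) (H : lmodType R) n (b : 'I_n -> H) x y :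
  in_span b x -> in_span b y -> in_span b (x - y).
Proof. by move=> hx hy; apply: spanD => //; rewrite -scaleN1r; apply: spanZ. Qed.

Lemma span_mxapp_gen (R : realFieldType) (H : lmodType R) m n k (A : 'M[R]_(m, k))
  (b : 'I_n -> H) (f : 'I_k -> H) i :
  (forall l, in_span b (f l)) -> in_span b (mxapp A f i).
Proof.
move=> hf; rewrite /mxapp; apply: (big_ind (in_span b)).
- exact: span0.
- exact: spanD.
- by move=> l _; apply: spanZ.
Qed.

Lemma span_null (R : realFieldType) (H : lmodType R) (ip : H -> H -> R) (hip : is_L2 ip)
  n (b : 'I_n -> H) h :
  in_span b h -> (forall j, ip h (b j) = 0) -> ip h h = 0.
Proof.
move=> [c hc] ho; rewrite {1}hc ip_suml // big1 // => j _.
by rewrite ipZl // ipsym // ho mulr0.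
Qed.

Lemma proj_gen (R : realFieldType) (H : lmodType R) (ip : H -> H -> R) (hip : is_L2 ip)
  m n (u : 'I_m -> H) (b : 'I_n -> H) :
  Cov ip u b *m mpinv (Cov ip b b) *m Cov ip b b = Cov ip u b.
Proof.
set G := Cov ip b b; set P := 1%:M - mpinv G *m G.
have [h1 _ _ _] := mpinvP G.
have GP : G *m P = 0 by rewrite /P mulmxBr mulmx1 mulmxA h1 subrr.
set w := mxapp P^T b.
have hw : forall k, ip (w k) (w k) = 0.
  move=> k; have e : Cov ip w w = P^T *m (G *m P).
    by rewrite /w CovMl // CovMr // trmxK mulmxA.
  by move: e; rewrite GP mulmx0 => /matrixP /(_ k k); rewrite !mxE.
have : Cov ip u w = 0.
  by apply/matrixP => i k; rewrite !mxE; apply: CS0.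
rewrite /w CovMr // trmxK /P mulmxBr mulmx1 mulmxA => /eqP.
by rewrite subr_eq0 => /eqP.
Qed.

Lemma oP_of (R : realFieldType) (H : lmodType R) (ip : H -> H -> R) (hip : is_L2 ip)
  m n (b : 'I_n -> H) (a : 'I_m -> H) (A : 'M[R]_(m, n)) :
  Cov ip a b = A *m Cov ip b b -> is_oP ip b a (mxapp A b).
Proof.
move=> e i; split; first exact: span_mxapp.
move=> j; have -> : ip (a i - mxapp A b i) (b j) = Cov ip (fun i => a i - mxapp A b i) b i j.
  by rewrite mxE.
by rewrite CovBl // CovMl // e subrr mxE.
Qed.

Lemma oP_cov (R : realFieldType) (H : lmodType R) (ip : H -> H -> R) (hip : is_L2 ip)
  m n (b : 'I_n -> H) (a pa : 'I_m -> H) :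
  is_oP ip b a pa -> Cov ip pa b = Cov ip a b.
Proof.
move=> h; apply/matrixP => i j; rewrite !mxE.
have := (h i).2 j; rewrite ipBl // => /eqP; rewrite subr_eq0 => /eqP.
by move=> ->.
Qed.

Lemma span_self (R : realFieldType) (H : lmodType R) n (b : 'I_n -> H) l :
  in_span b (b l).
Proof.
have := span_mxapp 1%:M b l; suff -> : mxapp 1%:M b l = b l by [].
rewrite /mxapp (bigD1 l) //= big1 => [|j hj]; first by rewrite mxE eqxx scale1r addr0.
by rewrite mxE eq_sym (negbTE hj) scale0r.
Qed.

Theorem mainTheorem4 (R : realFieldType) (H : lmodType R) (ip : H -> H -> R)
    (hip : is_L2 ip) (p q : nat)
    (X : 'I_p -> H) (eps : 'I_q -> H)
    (Hindep : Cov ip X eps = 0)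
    (Z : 'M[R]_(q, p)) :
  let Sigma := Cov ip X X in
  let V := Cov ip eps eps in
  let Y : 'I_q -> H := fun i => mxapp Z X i + eps i in
  let B := Z *m Sigma *m Z^T in
  let C := B + V in
  let K := Sigma *m Z^T *m mpinv C in
  let ZSigma := Sigma *m Z^T *m mpinv B in
  [/\ is_oP ip Y eps (mxapp (1%:M - Z *m K) Y),
      is_oP ip Y X (mxapp K Y)
    & forall (pe : 'I_q -> H) (px : 'I_p -> H),
        is_oP ip Y eps pe -> is_oP ip Y X px ->
        as_eq ip px (mxapp ZSigma (fun i => Y i - pe i))].
Proof.
move=> Sigma V Y B C K ZSigma.
have heX : Cov ip eps X = 0 by rewrite Cov_tr // Hindep trmx0.
have hXY : Cov ip X Y = Sigma *m Z^T by rewrite /Y CovDr // CovMr // Hindep addr0.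
have heY : Cov ip eps Y = V by rewrite /Y CovDr // CovMr // heX mul0mx add0r.
have hYY : Cov ip Y Y = C by rewrite {1}/Y CovDl // CovMl // hXY heY mulmxA.
have hXZ : Cov ip X (mxapp Z X) = Sigma *m Z^T by rewrite CovMr.
have hZZ : Cov ip (mxapp Z X) (mxapp Z X) = B by rewrite CovMl // CovMr // mulmxA.
have pK : Sigma *m Z^T *m mpinv C *m C = Sigma *m Z^T.
  by have := proj_gen hip X Y; rewrite hXY hYY.
have pB : Sigma *m Z^T *m mpinv B *m B = Sigma *m Z^T.
  by have := proj_gen hip X (mxapp Z X); rewrite hXZ hZZ.
split.
- apply: oP_of => //; rewrite heY hYY mulmxBl mul1mx.
  have -> : Z *m K *m C = B by rewrite /K -mulmxA pK mulmxA.
  by rewrite /C addrC addKr.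
- by apply: oP_of => //; rewrite hXY hYY /K pK.
move=> pe px hpe hpx i.
set w := fun i => px i - mxapp ZSigma (fun i => Y i - pe i) i.
have hw : Cov ip w Y = 0.
  rewrite /w CovBl // CovMl // CovBl // (oP_cov hip hpx) (oP_cov hip hpe) hXY heY hYY.
  by rewrite /C addrK /ZSigma pB subrr.
apply: (span_null hip (b := Y)).
- apply: spanB; first exact: (hpx i).1.
  apply: span_mxapp_gen => l; apply: spanB; first exact: span_self.
  exact: (hpe l).1.
- move=> j; have : Cov ip w Y i j = 0 by rewrite hw mxE.
  by rewrite mxE.
Qed.
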